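(* Let $t,t'\in B_n$ with $t\neq t'$ and let $G$ be a digraph such that $\mathbb{A}(G)$ satisfies $t\approx t'$. Let $K$ be a nontrivial strongly connected component of $G$ that is a whirl, and let $u,w$ be vertices in the same block of $K$. If $u\to v_0\to v_1\to\dots\to v_{Z_{t,t'}}$ is a walk in $G$, then $(w,v_0)$ is an edge of $G$. Consequently, $Z_G<Z_{t,t'}$.
   Context: Digraphs $G=(V,E)$ have $E\subseteq V\times V$, loops allowed, possibly infinite. $\mathbb{A}(G)$ is the groupoid on $V\cup\{\infty\}$ with $xy=x$ if $x,y\in V$, $(x,y)\in E$, and $xy=\infty$ otherwise. $B_n$: binary terms with $x_1,\dots,x_n$ each occurring once in this order; $G(t)$: rooted tree defined by $G(x_i)$ a single vertex and $G(t_1t_2)=G(t_1)\cup G(t_2)$ plus an edge from the leftmost variable of $t_1$ to that of $t_2$; root $x_1$. $T_x$ is the rooted induced subtree of $x$ and its descendants, $h$ is height. With $T=G(t)$, $T'=G(t')$: $Z_{t,t'}$ is the smallest $m\ge0$ such that some $x$ has $T_x=T'_x$, $h(T_x)=m$, and different parents in $T$ and $T'$. A strongly connected component (SCC) is trivial if it is a single vertex without a loop, nontrivial otherwise. For $m\ge1$, an $m$-whirl is a digraph whose vertex set is partitioned into nonempty blocks $B_0,\dots,B_{m-1}$ (indices mod $m$) with edge set exactly $\bigcup_iB_i\times B_{i+1}$. $Z_G$ is the largest $m\ge0$ such that some SCC that is a whirl has a block containing vertices $u,w$ with a walk $u\to v_0\to\dots\to v_m$ and $(w,v_0)\notin E$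 ($\infty$ if unbounded, $-\infty$ if no such $m$). *)

(* Defs.v *)
From mathcomp Require Import all_boot.
Set Implicit Arguments. Unset Strict Implicit. Unset Printing Implicit Defensive.

(* Variables x_1, ..., x_n are encoded as Var 0, ..., Var (n-1). *)
Inductive term := Var of nat | App of term & term.

Fixpoint vars (t : term) : seq nat :=
  match t with Var i => [:: i] | App t1 t2 => vars t1 ++ vars t2 end.

Definition inB (n : nat) (t : term) : Prop := vars t = iota 0 n.

Fixpoint lm (t : term) : nat :=
  match t with Var i => i | App t1 _ => lm t1 end.

(* edge list of the rooted tree G(t) (edges directed away from the root) *)
Fixpoint tedges (t : term) : seq (nat * nat) :=
  match t with
  | Var _ => [::]
  | App t1 t2 => (lm t1, lm t2) :: (tedges t1 ++ tedges t2)
  end.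

Definition tedge (t : term) (x y : nat) : Prop := (x, y) \in tedges t.

Inductive desc (t : term) (x : nat) : nat -> Prop :=
| desc_refl : desc t x x
| desc_step y z : desc t x y -> tedge t y z -> desc t x z.

Fixpoint tpath (t : term) (x k : nat) : Prop :=
  match k with
  | 0 => True
  | k'.+1 => exists y, tedge t x y /\ tpath t y k'
  end.

Definition height (t : term) (x m : nat) : Prop :=
  tpath t x m /\ ~ tpath t x m.+1.

Definition subtree_eq (t t' : term) (x : nat) : Prop :=
  (forall y, desc t x y <-> desc t' x y) /\
  (forall y z, desc t x y -> desc t x z -> (tedge t y z <-> tedge t' y z)).

Definition diff_parents (t t' : term) (x : nat) : Prop :=
  exists p p', tedge t p x /\ tedge t' p' x /\ p <> p'.

Definition Zprop (t t' : term) (m : nat) : Prop :=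
  exists x, subtree_eq t t' x /\ height t x m /\ diff_parents t t' x.

Definition IsZtt (t t' : term) (m : nat) : Prop :=
  Zprop t t' m /\ forall k, k < m -> ~ Zprop t t' k.

(* A digraph is a type V (possibly infinite) with an edge relation E. *)
(* A(G) has carrier option V, None standing for infinity. *)
Definition Aop (V : Type) (E : rel V) (x y : option V) : option V :=
  match x, y with
  | Some a, Some b => if E a b then Some a else None
  | _, _ => None
  end.

Fixpoint evalt (V : Type) (E : rel V) (a : nat -> option V) (t : term) : option V :=
  match t with
  | Var i => a i
  | App t1 t2 => Aop E (evalt E a t1) (evalt E a t2)
  end.

Definition satisfies (V : Type) (E : rel V) (t t' : term) : Prop :=
  forall a : nat -> option V, evalt E a t = evalt E a t'.

Inductive reach (V : Type) (E : rel V) (u : V) : V -> Prop :=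
| reach_refl : reach E u u
| reach_step v w : reach E u v -> E v w -> reach E u w.

Definition isSCC (V : Type) (E : rel V) (K : V -> Prop) : Prop :=
  exists v, forall u, K u <-> (reach E v u /\ reach E u v).

Definition nontrivialSCC (V : Type) (E : rel V) (K : V -> Prop) : Prop :=
  ~ (exists v, (forall u, K u <-> u = v) /\ ~~ E v v).

(* the induced subgraph on K is an m-whirl with block function blk
   (block B_i = {u in K | blk u = i}) *)
Definition whirl (V : Type) (E : rel V) (K : V -> Prop) (m : nat) (blk : V -> nat) : Prop :=
  0 < m /\
  (forall u, K u -> blk u < m) /\
  (forall i, i < m -> exists u, K u /\ blk u = i) /\
  (forall u v, K u -> K v -> (E u v <-> blk v = (blk u).+1 %% m)).

Definition walk (V : Type) (E : rel V) (u : V) (v : nat -> V) (m : nat) : Prop :=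
  E u (v 0) /\ forall i, i < m -> E (v i) (v i.+1).

Definition ZGprop (V : Type) (E : rel V) (m : nat) : Prop :=
  exists (K : V -> Prop) (k : nat) (blk : V -> nat) (u w : V) (v : nat -> V),
    isSCC E K /\ whirl E K k blk /\ K u /\ K w /\ blk u = blk w /\
    walk E u v m /\ ~~ E w (v 0).

Inductive extnat := NegInf | Fin of nat | PosInf.

Definition ext_lt (a b : extnat) : Prop :=
  match a, b with
  | NegInf, NegInf => False
  | NegInf, _ => True
  | Fin x, Fin y => x < y
  | Fin _, PosInf => True
  | _, _ => False
  end.

Definition IsZG (V : Type) (E : rel V) (z : extnat) : Prop :=
  match z with
  | NegInf => forall m, ~ ZGprop E m
  | Fin n => ZGprop E n /\ forall m, ZGprop E m -> m <= n
  | PosInf => forall k, exists m, k <= m /\ ZGprop E m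
  end.

(* Main.v *)
Require Import Defs.
From mathcomp Require Import all_boot zify.
From Stdlib Require ClassicalEpsilon.
Set Implicit Arguments. Unset Strict Implicit.

Fixpoint dep (t : term) (y : nat) : nat :=
  match t with Var _ => 0 | App t1 t2 => if y \in vars t2 then (dep t2 y).+1 else dep t1 y end.

Lemma lm_vars t : lm t \in vars t.
Proof. by elim: t => [i|t1 IH1 t2 IH2] /=; rewrite ?inE ?mem_cat ?IH1. Qed.

Lemma uniq_app t1 t2 : uniq (vars (App t1 t2)) ->
  [/\ uniq (vars t1), uniq (vars t2) & forall y, y \in vars t1 -> y \in vars t2 -> False].
Proof.
rewrite /= cat_uniq => /and3P [u1 /hasPn h u2]; split=> // y y1 y2.
by move: (h y y2); rewrite y1.
Qed.

Lemma edge_vars t y z : uniq (vars t) -> (y, z) \in tedges t ->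
  [/\ y \in vars t, z \in vars t & z != lm t].
Proof.
elim: t y z => [i|t1 IH1 t2 IH2] y z //= /uniq_app [u1 u2 d].
rewrite inE mem_cat => /orP [/eqP [-> ->]|/orP [/(IH1 _ _ u1) [h1 h2 h3]|/(IH2 _ _ u2) [h1 h2 h3]]].
- rewrite !mem_cat !lm_vars orbT; split=> //; apply/eqP=> e.
  by apply: (d (lm t1)); rewrite ?lm_vars // -e lm_vars.
- by rewrite !mem_cat h1 h2.
- rewrite !mem_cat h1 h2 !orbT; split=> //; apply/eqP=> e.
  by apply: (d z); rewrite // e lm_vars.
Qed.

Lemma uniq_parent t y y' z : uniq (vars t) -> (y, z) \in tedges t -> (y', z) \in tedges t -> y = y'.
Proof.
elim: t y y' z => [i|t1 IH1 t2 IH2] y y' z //= U.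
have [u1 u2 d] := uniq_app U.
have Hz1 : forall a, (a, z) \in tedges t1 -> z = lm t2 -> False.
  move=> a h ez; rewrite ez in h; case: (edge_vars u1 h) => _ h2 _; exact: (d _ h2 (lm_vars _)).
have Hz2 : forall a, (a, z) \in tedges t2 -> z = lm t2 -> False.
  by move=> a h e; case: (edge_vars u2 h) => _ _; rewrite e eqxx.
have Hz12 : forall a b, (a, z) \in tedges t1 -> (b, z) \in tedges t2 -> False.
  move=> a b h h'; case: (edge_vars u1 h) => _ h2 _; case: (edge_vars u2 h') => _ h2' _.
  exact: (d _ h2 h2').
rewrite !inE !mem_cat.
case/orP=> [/eqP [-> ez]|/orP [h|h]]; case/orP=> [/eqP [-> ez']|/orP [h'|h']] //.
- by case: (Hz1 _ h' ez).
- by case: (Hz2 _ h' ez).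
- by case: (Hz1 _ h ez').
- exact: IH1 h h'.
- by case: (Hz12 _ _ h h').
- by case: (Hz2 _ h ez').
- by case: (Hz12 _ _ h' h).
- exact: IH2 h h'.
Qed.

Lemma dep_lm t : uniq (vars t) -> dep t (lm t) = 0.
Proof.
elim: t => [i|t1 IH1 t2 IH2] //= U; have [u1 u2 d] := uniq_app U.
case: ifP => [h|_]; last exact: IH1.
by case: (d _ (lm_vars _) h).
Qed.

Lemma dep_edge t y z : uniq (vars t) -> (y, z) \in tedges t -> dep t z = (dep t y).+1.
Proof.
elim: t y z => [i|t1 IH1 t2 IH2] y z //= U; have [u1 u2 d] := uniq_app U.
rewrite inE mem_cat => /orP [/eqP [-> ->]|/orP [h|h]].
- rewrite lm_vars dep_lm //; case: ifP => [h|_]; first by case: (d _ (lm_vars _) h).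
  by rewrite dep_lm.
- case: (edge_vars u1 h) => h1 h2 _.
  case: ifP => [h3|_]; first by case: (d _ h2 h3).
  case: ifP => [h3|_]; first by case: (d _ h1 h3).
  exact: IH1.
- case: (edge_vars u2 h) => h1 h2 _. by rewrite h1 h2 (IH2 _ _ u2 h).
Qed.

Fixpoint tpathto (t : term) (x k y : nat) : Prop :=
  match k with 0 => x = y | k'.+1 => exists y', tedge t x y' /\ tpathto t y' k' y end.

Lemma tpathto_snoc t k x y z : tpathto t x k y -> tedge t y z -> tpathto t x k.+1 z.
Proof.
elim: k x => [|k IH] x /=; first by move=> -> e; exists z.
by move=> [y' [e1 h]] e; exists y'; split=> //; apply: IH.
Qed.

Lemma tpathto_tpath t k x y : tpathto t x k y -> tpath t x k.
Proof.
elim: k x => [|k IH] x //= [y' [e h]]; exists y'; split=> //; exact: IH h.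
Qed.

Lemma tpathto_dep t k x y : uniq (vars t) -> tpathto t x k y -> dep t y = dep t x + k.
Proof.
move=> U; elim: k x => [|k IH] x /=; first by move=> ->; rewrite addn0.
move=> [y' [e h]]; rewrite (IH _ h) (dep_edge U e); lia.
Qed.

Lemma desc_tpathto t x y : desc t x y -> exists k, tpathto t x k y.
Proof.
elim=> [|y' z _ [k h] e]; first by exists 0.
exists k.+1; exact: tpathto_snoc h e.
Qed.

Lemma tpath_le t k x j : tpath t x k -> j <= k -> tpath t x j.
Proof.
elim: k x j => [|k IH] x [|j] //= [y [e h]] hj; exists y; split=> //; exact: IH h hj.
Qed.

Lemma desc_dep t x y : uniq (vars t) -> desc t x y -> dep t x <= dep t y.
Proof. move=> U /desc_tpathto [k h]; rewrite (tpathto_dep U h); lia. Qed.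

Lemma acyc t y z : uniq (vars t) -> tedge t y z -> desc t z y -> False.
Proof. move=> U e /(desc_dep U); rewrite (dep_edge U e); lia. Qed.

Lemma evalE V (E : rel V) (f : nat -> V) t :
  evalt E (fun i => Some (f i)) t =
  if all (fun e => E (f e.1) (f e.2)) (tedges t) then Some (f (lm t)) else None.
Proof.
elim: t => [i|t1 IH1 t2 IH2] //=; rewrite IH1 IH2 all_cat.
by case: (all _ (tedges t1)); case: (all _ (tedges t2)); rewrite /= ?andbF ?andbT //; case: (E _ _).
Qed.

Theorem lemma6p16 (n : nat) (t t' : term) (V : Type) (E : rel V) :
  inB n t -> inB n t' -> t <> t' -> satisfies E t t' ->
  forall Z : nat, IsZtt t t' Z ->
  (forall (K : V -> Prop) (m : nat) (blk : V -> nat) (u w : V) (v : nat -> V),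
      isSCC E K -> nontrivialSCC E K -> whirl E K m blk ->
      K u -> K w -> blk u = blk w -> walk E u v Z -> E w (v 0))
  /\ (forall z : extnat, IsZG E z -> ext_lt z (Fin Z)).
Proof.
move=> Bt Bt' _ sat Z [[x [[Dsame _] [[hp hnp] [p [p' [ep [ep' pp']]]]]]] _].
have ut : uniq (vars t) by rewrite Bt iota_uniq.
have ut' : uniq (vars t') by rewrite Bt' iota_uniq.
have hom : forall f : nat -> V, all (fun e => E (f e.1) (f e.2)) (tedges t) ->
    all (fun e => E (f e.1) (f e.2)) (tedges t').
  move=> f h; have := sat (fun i => Some (f i)); rewrite !evalE h.
  by case: (all _ _).
have pD : ~ desc t x p by move=> h; apply: (acyc ut ep h).
have p'D : ~ desc t x p' by move=> /(proj1 (Dsame _)) h; apply: (acyc ut' ep' h).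
have xp : x <> p by move=> e; apply: pD; rewrite -e; constructor.
have xp' : x <> p' by move=> e; apply: p'D; rewrite -e; constructor.
have part1 : forall (K : V -> Prop) (m : nat) (blk : V -> nat) (u w : V) (v : nat -> V),
    whirl E K m blk -> K u -> K w -> blk u = blk w -> walk E u v Z -> E w (v 0).
  move=> K m blk u w v [m0 [blkm [blkex Ewh]]] Ku Kw buw [Euv0 Ewalk].
  have selex : forall i, {y : V | K y /\ blk y = i %% m}.
    move=> i; apply: ClassicalEpsilon.constructive_indefinite_description.
    by apply: blkex; rewrite ltn_pmod.
  pose sel i := proj1_sig (selex i).
  have selP : forall i, K (sel i) /\ blk (sel i) = i %% m := fun i => proj2_sig (selex i).
  have Kedge : forall a b, K a -> K b -> blk b = (blk a).+1 %% m -> E a b.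
    by move=> a b Ka Kb h; apply/(Ewh a b Ka Kb).
  have Kmod : forall a b i, K a -> K b -> blk a = i %% m -> blk b = i.+1 %% m -> E a b.
    move=> a b i Ka Kb ha hb; apply: Kedge => //; by rewrite hb ha -[in RHS]addn1 modnDml addn1.
  have c1 : dep t p = dep t p' %[mod m].
    have h := hom (fun y => sel (dep t y)).
    have h1 : all (fun e => E (sel (dep t e.1)) (sel (dep t e.2))) (tedges t).
      apply/allP => -[y z] /= yz; apply: (Kmod _ _ (dep t y)); [exact: (proj1 (selP _)) | exact: (proj1 (selP _)) |
        exact: (proj2 (selP _)) | by rewrite (proj2 (selP _)) (dep_edge ut yz)].
    have /allP h2 := h h1.
    have := h2 _ ep' => /= /(Ewh _ _ (proj1 (selP _)) (proj1 (selP _))).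
    rewrite !(proj2 (selP _)) (dep_edge ut ep) => e.
    apply/eqP; rewrite -(eqn_modDr 1) !addn1; apply/eqP.
    by rewrite e -addn1 modnDml addn1.
  pose s := blk u + dep t p * (m - 1).
  have sp : (dep t p + s) %% m = blk u.
    have -> : dep t p + s = dep t p * m + blk u by rewrite /s; nia.
    by rewrite modnMDl modn_small // blkm.
  pose f2 y := if y == p then u else if y == p' then w else
    if ClassicalEpsilon.excluded_middle_informative (desc t x y) then v (dep t y - dep t x)
    else sel (dep t y + s).
  have outP : forall y, ~ desc t x y -> K (f2 y) /\ blk (f2 y) = (dep t y + s) %% m.
    move=> y yD; rewrite /f2; case: (eqVneq y p) => [->|_]; first by [].
    case: (eqVneq y p') => [->|_].
      by rewrite -buw -sp -modnDml c1 modnDml.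
    destruct (ClassicalEpsilon.excluded_middle_informative (desc t x y)) as [h|h]; [contradiction | exact: selP].
  have inP : forall y, desc t x y -> f2 y = v (dep t y - dep t x).
    move=> y yD; rewrite /f2; case: (eqVneq y p) => [e|_]; first by rewrite e in yD.
    case: (eqVneq y p') => [e|_]; first by rewrite e in yD.
    by destruct (ClassicalEpsilon.excluded_middle_informative (desc t x y)).
  have homf : all (fun e => E (f2 e.1) (f2 e.2)) (tedges t).
    apply/allP => -[y z] /= yz.
    case: (ClassicalEpsilon.excluded_middle_informative (desc t x z)) => Dz.
      case: (eqVneq z x) => [ezx|nzx].
        rewrite ezx in yz *; rewrite (uniq_parent ut yz ep) (inP x); last by constructor.
        by rewrite /f2 eqxx subnn.
      have [y0 D0 e0] : exists2 y0, desc t x y0 & tedge t y0 z.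
        by case: Dz nzx => [|y0 z0 D0 e0 _]; [rewrite eqxx | exists y0].
      have ey := uniq_parent ut e0 yz; subst y.
      rewrite (inP _ D0) (inP _ Dz).
      have le1 := desc_dep ut D0.
      have dz := dep_edge ut yz.
      have [k pk] := desc_tpathto Dz.
      have dk := tpathto_dep ut pk.
      have kZ : k <= Z.
        case: (leqP k Z) => // kZ; case: hnp; apply: (tpath_le (tpathto_tpath pk)); exact: kZ.
      have -> : dep t z - dep t x = (dep t y0 - dep t x).+1 by lia.
      apply: Ewalk; lia.
    have yD : ~ desc t x y by move=> h; apply: Dz; apply: desc_step h yz.
    have [Ky by_] := outP y yD; have [Kz bz] := outP z Dz.
    apply: (Kmod _ _ (dep t y + s)) => //.
    by rewrite bz (dep_edge ut yz) addSn.
  have /allP := hom _ homf => /(_ _ ep') /=.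
  rewrite (inP x); last by constructor.
  rewrite subnn /f2; case: eqP => [e|_]; first by case: pp'.
  by rewrite eqxx.
split.
  move=> K m blk u w v _ _; exact: part1.
have noZ : forall m, Z <= m -> ~ ZGprop E m.
  move=> m Zm [K [k [blk [u [w [v [_ [wh [Ku [Kw [buw [[e0 wk] nE]]]]]]]]]]]].
  move/negP: nE; apply; apply: (part1 K k blk u w v) => //; split=> // i iZ.
  apply: wk; lia.
case=> //= [k [hk _]|hinf].
  by rewrite ltnNge; apply/negP => /noZ; apply.
have [m [Zm hm]] := hinf Z; exact: (noZ m Zm hm).
Qed.
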